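(* Let $b_\omega$ be a highest weight element of the spinor crystal $B_S$ (i.e. $b_\omega=b_{\Lambda_{n-1}}$ or $b_\omega=b_{\Lambda_n}$). Let $i_1,\dots,i_m\in I$ be such that $\tilde f_{i_m}\cdots\tilde f_{i_2}\tilde f_{i_1}b_\omega\neq0$. Let $\Phi:B(\infty)\hookrightarrow B(\infty)\otimes B_{i_1}\otimes\cdots\otimes B_{i_m}$ be the composition $\Phi=(\Psi_{i_1}\otimes1)\circ\cdots\circ(\Psi_{i_{m-1}}\otimes 1)\circ\Psi_{i_m}$ (first $\Psi_{i_m}:B(\infty)\to B(\infty)\otimes B_{i_m}$, then $\Psi_{i_{m-1}}$ applied to the $B(\infty)$ factor, etc.). Then $$\Phi(\tilde f^*_{i_m}\cdots\tilde f^*_{i_2}\tilde f^*_{i_1}b_\infty)=b_\infty\otimes b_{i_1}(-1)\otimes b_{i_2}(-1)\otimes\cdots\otimes b_{i_m}(-1)$$ and $$\Phi(\tilde f_{i_1}\tilde f_{i_2}\cdots\tilde f_{i_m}b_\infty)=b_\infty\otimes b_{i_1}(-1)\otimes b_{i_2}(-1)\otimes\cdots\otimes b_{i_m}(-1).$$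
   Context: Let $\mathfrak g$ be of type $D_n$ with index set $I=\{1,\dots,n\}$, simple roots $\alpha_j=\epsilon_j-\epsilon_{j+1}$ ($j<n$), $\alpha_n=\epsilon_{n-1}+\epsilon_n$. The spinor crystal $B_S$ is the set of sign vectors $(i_1,\dots,i_n)$ with weight $\frac12\sum i_j\epsilon_j$; for $j<n$, $\tilde f_j$ turns $(i_j,i_{j+1})=(+,-)$ into $(-,+)$ (else $0$), $\tilde e_j$ the reverse; $\tilde f_n$ turns $(i_{n-1},i_n)=(+,+)$ into $(-,-)$ (else $0$), $\tilde e_n$ the reverse; its highest weight elements are $b_{\Lambda_{n-1}}=(+,\dots,+,-)$ and $b_{\Lambda_n}=(+,\dots,+)$. (Generalized) crystals: sets with $\mathrm{wt},\varepsilon_i,\varphi_i\in\mathbb Z\sqcup\{-\infty\}$, $\tilde e_i,\tilde f_i$ satisfying Kashiwara's axioms; tensor product: $\mathrm{wt}$ adds, $\varepsilon_i(a\otimes b)=\max(\varepsilon_i(a),\varepsilon_i(b)-\langle\mathrm{wt}\,a,\alpha_i^\vee\rangle)$, $\varphi_i(a\otimes b)=\max(\varphi_i(b),\varphi_i(a)+\langle\mathrm{wt}\,b,\alpha_i^\vee\rangle)$, $\tilde e_i(a\otimes b)=a\otimes\tilde e_ib$ if $\varepsilon_i(b)>\varphi_i(a)$, else $\tilde e_ia\otimes b$; $\tilde f_i(a\otimes b)=a\otimes\tilde f_ib$ if $\varepsilon_i(b)\ge\varphi_i(a)$, else $\tilde f_ia\otimes b$. $B(\infty)$ is Kashiwara's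 crystal of $U_q^-(\mathfrak g)$ with weight-$0$ element $b_\infty$, $\varepsilon_i(b)=\max\{k:\tilde e_i^kb\ne0\}$, $\varphi_i(b)=\varepsilon_i(b)+\langle\alpha_i^\vee,\mathrm{wt}\, b\rangle$; $*$ is Kashiwara's involution on $B(\infty)$ and $\tilde f_i^*(b)=(\tilde f_i(b^* ))^*$. For $i\in I$, $B_i=\{b_i(k):k\in\mathbb Z\}$ with $\mathrm{wt}(b_i(k))=k\alpha_i$, $\varphi_i(b_i(k))=k$, $\varepsilon_i(b_i(k))=-k$, $\varphi_j=\varepsilon_j=-\infty$ for $j\neq i$, $\tilde e_ib_i(k)=b_i(k+1)$, $\tilde f_ib_i(k)=b_i(k-1)$, $\tilde e_j=\tilde f_j=0$ for $j\ne i$. $\Psi_i:B(\infty)\hookrightarrow B(\infty)\otimes B_i$ is Kashiwara's unique strict crystal embedding with $\Psi_i(b_\infty)=b_\infty\otimes b_i(0)$. *)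

(* Defs.v *)
From HB Require Import structures.
From mathcomp Require Import all_boot all_order all_algebra.
Set Implicit Arguments. Unset Strict Implicit. Unset Printing Implicit Defensive.
Import Order.TTheory GRing.Theory Num.Theory.
Local Open Scope ring_scope.

(* Index set I = {1,...,n} is encoded as 'I_n (index j : 'I_n stands for j+1). *)

(* Simple roots in epsilon-coordinates:
   alpha_j = eps_j - eps_{j+1} (j < n-1, 0-indexed), alpha_{n-1} = eps_{n-2} + eps_{n-1}. *)
Definition alpha (n : nat) (i k : 'I_n) : int :=
  if (i.+1 < n)%N then ((k == i :> nat) : nat)%:Z - ((k == i.+1 :> nat) : nat)%:Z
  else ((k.+2 == n)%N : nat)%:Z + ((k.+1 == n)%N : nat)%:Z.

(* Cartan matrix <alpha_i^vee, alpha_j> (simply laced: standard inner product). *)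
Definition cartan (n : nat) (i j : 'I_n) : int := \sum_(k < n) alpha i k * alpha j k.

(* Weights of the crystals considered (B(oo), B_i and their tensor products) lie
   in the root lattice; we record them in coordinates w.r.t. the simple roots. *)
Definition weight (n : nat) := {ffun 'I_n -> int}.

Definition hpair (n : nat) (i : 'I_n) (w : weight n) : int :=
  \sum_(j < n) cartan i j * w j.

Definition shiftw (n : nat) (w : weight n) (i : 'I_n) (k : int) : weight n :=
  [ffun j => w j + (if j == i then k else 0)].

(* Z \sqcup {-oo} encoded as option int, None = -oo. *)
Definition oadd (x : option int) (k : int) : option int := omap (fun a => a + k) x.
Definition omax (x y : option int) : option int :=
  match x, y with
  | Some a, Some b => Some (Num.max a b)
  | Some a, None => Some a
  | None, y => y
  end.
Definition ogt (x y : option int) : bool :=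
  match x, y with
  | Some a, Some b => b < a
  | Some _, None => true
  | None, _ => false
  end.
Definition oge (x y : option int) : bool :=
  match x, y with
  | Some a, Some b => b <= a
  | _, None => true
  | None, Some _ => false
  end.

(* (Generalized) crystal data; the operators e~_i, f~_i return None for 0. *)
Record crystal (n : nat) := Crystal {
  ccar :> Type;
  wt : ccar -> weight n;
  eps : 'I_n -> ccar -> option int;
  phi : 'I_n -> ccar -> option int;
  et : 'I_n -> ccar -> option ccar;
  ft : 'I_n -> ccar -> option ccar }.
Arguments wt {n c}.
Arguments eps {n c}.
Arguments phi {n c}.
Arguments et {n c}.
Arguments ft {n c}.

Definition is_crystal (n : nat) (C : crystal n) : Prop :=
  forall (i : 'I_n) (b : C),
    phi i b = oadd (eps i b) (hpair i (wt b)) /\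
    (forall b', et i b = Some b' ->
       [/\ wt b' = shiftw (wt b) i 1, eps i b' = oadd (eps i b) (-1)
         & phi i b' = oadd (phi i b) 1]) /\
    (forall b', ft i b = Some b' ->
       [/\ wt b' = shiftw (wt b) i (-1), eps i b' = oadd (eps i b) 1
         & phi i b' = oadd (phi i b) (-1)]) /\
    (forall b', ft i b = Some b' <-> et i b' = Some b) /\
    (phi i b = None -> et i b = None /\ ft i b = None).

(* Tensor product (Kashiwara's convention, as in the paper). *)
Definition tensor (n : nat) (C D : crystal n) : crystal n :=
  @Crystal n (C * D)%type
    (fun p => [ffun j => wt p.1 j + wt p.2 j])
    (fun i p => omax (eps i p.1) (oadd (eps i p.2) (- hpair i (wt p.1))))
    (fun i p => omax (phi i p.2) (oadd (phi i p.1) (hpair i (wt p.2))))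
    (fun i p => if ogt (eps i p.2) (phi i p.1)
                then omap (fun b' => (p.1, b')) (et i p.2)
                else omap (fun a' => (a', p.2)) (et i p.1))
    (fun i p => if oge (eps i p.2) (phi i p.1)
                then omap (fun b' => (p.1, b')) (ft i p.2)
                else omap (fun a' => (a', p.2)) (ft i p.1)).

(* The crystal B_i = { b_i(k) : k in Z }, b_i(k) encoded as k. *)
Definition Bi (n : nat) (i : 'I_n) : crystal n :=
  @Crystal n int
    (fun k => [ffun j => if j == i then k else 0])
    (fun j k => if j == i then Some (- k) else None)
    (fun j k => if j == i then Some k else None)
    (fun j k => if j == i then Some (k + 1) else None)
    (fun j k => if j == i then Some (k - 1) else None).

Definition strict_embedding (n : nat) (C D : crystal n) (F : C -> D) : Prop :=
  injective F /\
  forall (i : 'I_n) (b : C),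
    [/\ wt (F b) = wt b, eps i (F b) = eps i b, phi i (F b) = phi i b,
        et i (F b) = omap F (et i b) & ft i (F b) = omap F (ft i b)].

Definition estar (n : nat) (C : crystal n) (star : C -> C) (i : 'I_n) (b : C)
  : option C := omap star (et i (star b)).
Definition fstar (n : nat) (C : crystal n) (star : C -> C) (i : 'I_n) (b : C)
  : option C := omap star (ft i (star b)).

(* Apply operators g_{i_1}, then g_{i_2}, ..., then g_{i_m} (i_1 first). *)
Definition opath (T : Type) (n : nat) (g : 'I_n -> T -> option T)
    (s : seq 'I_n) (x : T) : option T :=
  foldl (fun ox i => obind (g i) ox) (Some x) s.

(* Characterization of (B(oo), b_oo, *, (Psi_i)_i):
   - B is a crystal (of type D_n) and (1)-(7) of Kashiwara--Saito,
     Prop. 3.2.3 hold, with the strict embeddings Psi_i : B -> B (x) B_i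
     normalized by Psi_i(b_oo) = b_oo (x) b_i(0); this determines
     B ~= B(oo) and the Psi_i uniquely;
   - * is an involution preserving weights, and Kashiwara's formula
     Psi_i(b) = (e~_i^* )^{c} b (x) b_i(-c), c = eps_i(b^* ), holds. *)
Definition is_Binf (n : nat) (B : crystal n) (binf : B) (star : B -> B)
    (Psi : forall i : 'I_n, B -> B * int) : Prop :=
  is_crystal B /\
  (wt binf = 0 :> weight n /\ (forall b : B, wt b = 0 :> weight n -> b = binf)) /\
  (forall (b : B) (j : 'I_n), wt b j <= 0) /\
  ((forall i : 'I_n, eps i binf = Some 0) /\ (forall (i : 'I_n) (b : B), eps i b <> None)) /\
  (forall i : 'I_n,
     @strict_embedding n B (tensor B (Bi i)) (Psi i) /\ Psi i binf = (binf, 0)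
     /\ (forall b : B, (Psi i b).2 <= 0)) /\
  (forall b : B, b <> binf -> exists i : 'I_n, (Psi i b).2 < 0) /\
  (forall b : B, star (star b) = b) /\
  (forall b : B, wt (star b) = wt b) /\
  (forall (i : 'I_n) (b : B), exists c : nat,
      eps i (star b) = Some c%:Z /\
      exists b', iter c (fun ob => obind (estar star i) ob) (Some b) = Some b'
                 /\ Psi i b = (b', - c%:Z)).

(* Phi = (Psi_{i_1} (x) 1) o ... o (Psi_{i_{m-1}} (x) 1) o Psi_{i_m}:
   B -> B (x) B_{i_1} (x) ... (x) B_{i_m}; an element
   b (x) b_{i_1}(k_1) (x) ... (x) b_{i_m}(k_m) is encoded as (b, [:: k_1; ...; k_m]). *)
Fixpoint Phi_rev (n : nat) (B : Type) (Psi : 'I_n -> B -> B * int)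
    (rs : seq 'I_n) (b : B) : B * seq int :=
  match rs with
  | [::] => (b, [::])
  | i :: rs' => let p := Psi i b in
                let q := Phi_rev Psi rs' p.1 in (q.1, rcons q.2 p.2)
  end.
Definition Phi (n : nat) (B : Type) (Psi : 'I_n -> B -> B * int)
    (s : seq 'I_n) (b : B) : B * seq int := Phi_rev Psi (rev s) b.

(* Spinor crystal B_S: sign vectors, true = '+'. *)
Definition spinor (n : nat) := {ffun 'I_n -> bool}.
Definition sgn (n : nat) (s : spinor n) (k : nat) : bool :=
  if insub k is Some j then s j else false.
Definition flip2 (n : nat) (s : spinor n) (k : nat) : spinor n :=
  [ffun j : 'I_n => if (j == k :> nat) || (j == k.+1 :> nat) then ~~ s j else s j].
Definition spin_f (n : nat) (i : 'I_n) (s : spinor n) : option (spinor n) :=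
  if (i.+1 < n)%N then
    (if sgn s i && ~~ sgn s i.+1 then Some (flip2 s i) else None)
  else
    (if sgn s (n - 2) && sgn s (n - 1) then Some (flip2 s (n - 2)) else None).
Definition bLam_n (n : nat) : spinor n := [ffun _ => true].
Definition bLam_nm1 (n : nat) : spinor n := [ffun j : 'I_n => (j.+1 != n)%N].

(* Main.v *)
Require Import Defs.
From HB Require Import structures.
From mathcomp Require Import all_boot all_order all_algebra.
From mathcomp Require Import zify.
Import Order.TTheory GRing.Theory Num.Theory.
Local Open Scope ring_scope.

Lemma sum_ind n (g : nat -> int) (a : nat) : (a < n)%N ->
  \sum_(k < n) ((k == a :> nat) : nat)%:Z * g k = g a.
Proof.
move=> Ha; rewrite (bigD1 (Ordinal Ha)) //= eqxx mul1r big1 ?addr0 // => k Hk.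
case: eqP => [E|_]; last by rewrite mul0r.
by move: Hk; rewrite -val_eqE /= E eqxx.
Qed.

Lemma pair_alpha n (Hn : (2 <= n)%N) (i : 'I_n) (g : nat -> int) :
  \sum_(k < n) alpha i k * g k =
  if (i.+1 < n)%N then g i - g i.+1 else g (n-2)%N + g (n-1)%N.
Proof.
rewrite /alpha; case Hi: (i.+1 < n)%N.
- under eq_bigr => k _ do rewrite mulrBl.
  by rewrite sumrB !sum_ind.
- have E2 : forall k : nat, (k.+2 == n)%N = (k == n - 2)%N by move=> k; lia.
  have E1 : forall k : nat, (k.+1 == n)%N = (k == n - 1)%N by move=> k; lia.
  under eq_bigr => k _ do rewrite E2 E1 mulrDl.
  rewrite big_split /= !sum_ind //; lia.
Qed.

Definition galpha n (i : 'I_n) (k : nat) : int :=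
  if (i.+1 < n)%N then ((k == i :> nat) : nat)%:Z - ((k == i.+1 :> nat) : nat)%:Z
  else ((k.+2 == n)%N : nat)%:Z + ((k.+1 == n)%N : nat)%:Z.
Arguments galpha {n}.

Lemma cartan_ii n (Hn : (2 <= n)%N) (i : 'I_n) : cartan i i = 2.
Proof.
have -> : cartan i i = \sum_(k < n) alpha i k * galpha i k by [].
rewrite pair_alpha // /galpha; case Hi: (i.+1 < n)%N.
- have -> : (i == i.+1 :> nat) = false by lia.
  have -> : (i.+1 == i :> nat) = false by lia.
  by rewrite !eqxx.
- have -> : ((n - 2).+2 == n)%N = true by lia.
  have -> : ((n - 2).+1 == n)%N = false by lia.
  have -> : ((n - 1).+2 == n)%N = false by lia.
  have -> : ((n - 1).+1 == n)%N = true by lia.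
  by [].
Qed.

Lemma sgn_ord n (v : spinor n) (k : 'I_n) : sgn v k = v k.
Proof. rewrite /sgn; case: insubP => [j _ Ej|]; last by rewrite ltn_ord. by congr (v _); apply: val_inj. Qed.

Definition sig n (v : spinor n) (k : nat) : int := if sgn v k then 1 else -1.
Arguments sig {n}.
Definition Dp n (i : 'I_n) (v : spinor n) : int := \sum_(k < n) alpha i k * sig v k.
Arguments Dp {n}.

Lemma spin_step n (Hn : (4 <= n)%N) (i : 'I_n) (u v : spinor n) :
  spin_f i u = Some v ->
  Dp i u = 2 /\ forall k : 'I_n, sig v k = sig u k - 2 * alpha i k.
Proof.
rewrite /spin_f /Dp pair_alpha; last by lia.
case Hi: (i.+1 < n)%N.
- case Hc: (sgn u i && ~~ sgn u i.+1) ; last by []. case=> <-.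
  move/andP: Hc => [H1 /negbTE H2].
  split; first by rewrite /sig H1 H2.
  move=> k; rewrite /sig !sgn_ord ffunE /alpha Hi.
  case: (eqVneq (k : nat) i) => [E|N1].
  + have Uk : u k = true by rewrite -sgn_ord E.
    rewrite Uk ?E /=.
    have -> : (i == i.+1 :> nat) = false by lia.
    by [].
  + case: (eqVneq (k : nat) i.+1) => [E|N2].
    * have Uk : u k = false by rewrite -sgn_ord E.
      rewrite Uk ?E /=.
      by [].
    * rewrite /=.
      by case: (u k).
- case Hc: (sgn u (n - 2) && sgn u (n - 1)) ; last by []. case=> <-.
  move/andP: Hc => [H1 H2].
  split; first by rewrite /sig H1 H2.
  move=> k; rewrite /sig !sgn_ord ffunE /alpha Hi.
  have Hk := ltn_ord k.
  case: (eqVneq (k : nat) (n - 2)%N) => [E|N1].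
  + have Uk : u k = true by rewrite -sgn_ord E.
    rewrite Uk ?E /=.
    have -> : ((n - 2).+2 == n)%N = true by lia.
    have -> : ((n - 2).+1 == n)%N = false by lia.
    by [].
  + case: (eqVneq (k : nat) (n - 1)%N) => [E|N2].
    * have Uk : u k = true by rewrite -sgn_ord E.
      rewrite Uk ?E /=.
      have -> : ((n - 1) == (n - 2).+1)%N = true by lia.
      have -> : ((n - 1).+2 == n)%N = false by lia.
      have -> : ((n - 1).+1 == n)%N = true by lia.
      by [].
    * have -> : ((k : nat) == (n - 2).+1)%N = false by lia.
      have -> : ((k : nat).+2 == n)%N = false by lia.
      have -> : ((k : nat).+1 == n)%N = false by lia.
      rewrite /=.
      by case: (u k).
Qed.

Lemma D_step n (Hn : (4 <= n)%N) (i j : 'I_n) (u v : spinor n) :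
  spin_f j u = Some v -> Dp i v = Dp i u - 2 * cartan i j.
Proof.
move=> /(spin_step n Hn) [_ Hp].
rewrite /Dp /cartan.
under eq_bigr => k _ do rewrite Hp mulrBr.
rewrite sumrB mulr_sumr; congr (_ - _).
by apply: eq_bigr => k _; rewrite mulrCA.
Qed.

Lemma foldl_None T n (g : 'I_n -> T -> option T) t :
  foldl (fun ox i => obind (g i) ox) None t = None.
Proof. by elim: t. Qed.

Lemma opath_cons T n (g : 'I_n -> T -> option T) j t x :
  opath g (j :: t) x = obind (opath g t) (g j x).
Proof. rewrite /opath /=; case: (g j x) => [y|] //=; exact: foldl_None. Qed.

Lemma opath_nil T n (g : 'I_n -> T -> option T) x : opath g [::] x = Some x.
Proof. by []. Qed.

Lemma opath_rcons T n (g : 'I_n -> T -> option T) t j x :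
  opath g (rcons t j) x = obind (g j) (opath g t x).
Proof. by rewrite /opath foldl_rcons. Qed.

Lemma opath_embed n (C D : Type) (F : C -> D) (g1 : 'I_n -> C -> option C)
  (g2 : 'I_n -> D -> option D) :
  (forall j x, g2 j (F x) = omap F (g1 j x)) ->
  forall t x, opath g2 t (F x) = omap F (opath g1 t x).
Proof.
move=> H; elim=> [|j t IH] x //.
rewrite !opath_cons H; case: (g1 j x) => //= y; exact: IH.
Qed.

Arguments opath_embed {n C D F g1 g2}.

Lemma hpair0 n (i : 'I_n) : hpair i (0 : weight n) = 0.
Proof. rewrite /hpair big1 // => j _; by rewrite ffunE mulr0. Qed.

Lemma hpair_shift n (i j : 'I_n) (w : weight n) (k : int) :
  hpair i (shiftw w j k) = hpair i w + cartan i j * k.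
Proof.
rewrite /hpair /shiftw.
under eq_bigr => l _ do rewrite ffunE mulrDr.
rewrite big_split /=; congr (_ + _).
rewrite (bigD1 j) //= eqxx big1 ?addr0 // => l /negbTE ->; by rewrite mulr0.
Qed.

Fixpoint condh n (i : 'I_n) (t : seq 'I_n) (h : int) : Prop :=
  match t with
  | [::] => True
  | j :: rest => (j = i -> 2 <= h) /\ condh n i rest (h - cartan i j)
  end.
Arguments condh {n}.

Lemma G_cond n (Hn : (4 <= n)%N) (i : 'I_n) : forall (s : seq 'I_n) (v0 v : spinor n),
  opath (@spin_f n) s v0 = Some v ->
  forall h : int, 2 <= 2 * h + Dp i v -> condh i (rev s) h.
Proof.
elim/last_ind => [|t j IH] v0 v; first by rewrite /=.
rewrite opath_rcons; case E: (opath (@spin_f n) t v0) => [u|] //= Hv h Hh.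
rewrite rev_rcons /=; split.
- move=> Eji; subst j.
  have [Du _] := spin_step n Hn i u v Hv.
  have := D_step n Hn i i u v Hv; rewrite cartan_ii ?Du; last by lia.
  move=> Dv; rewrite Dv in Hh; lia.
- apply: (IH v0 u E).
  rewrite (D_step n Hn i j u v Hv) in Hh; lia.
Qed.
Arguments G_cond {n}.

Lemma tens_chain n (B : crystal n) (binf : B) (star : B -> B)
  (Psi : 'I_n -> B -> B * int) (HB : is_Binf binf star Psi) (i : 'I_n) :
  forall (t : seq 'I_n) (x x' : B), opath (@ft n B) t x = Some x' ->
  condh i t (hpair i (wt x)) ->
  opath (@ft n (tensor B (Bi i))) t ((x, -1) : tensor B (Bi i))
    = Some ((x', -1) : tensor B (Bi i)).
Proof.
case: HB => [Hcry [_ [_ [[_ HepsN] [_ [_ [Hinv [_ HK]]]]]]]].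
elim=> [|j t IH] x x'.
- by rewrite opath_nil => -[->].
- rewrite opath_cons; case E: (ft j x) => [x1|] // Hx' [Hc Hrest].
  rewrite /= in Hx'.
  rewrite opath_cons.
  have [e He] : exists e : nat, eps j x = Some e%:Z.
  { have [c [Hc' _]] := HK j (star x); rewrite Hinv in Hc'; by exists c. }
  have Hphi := (Hcry j x).1.
  have -> : ft j ((x, -1) : tensor B (Bi i)) = Some ((x1, -1) : tensor B (Bi i)).
  { rewrite /=.
    case: (eqVneq j i) => [Eji|Nji].
    - subst j. rewrite Hphi He /=.
      have -> : (e%:Z + hpair i (wt x) <= - -1) = false.
      { have := Hc erefl; lia. }
      by rewrite E.
    - rewrite Hphi He /=. by rewrite E. }
  have Hc1 : condh i t (hpair i (wt x1)).
  { have [Hw _] := (Hcry j x).2.2.1 x1 E.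
    by rewrite Hw hpair_shift mulrN1. }
  exact: (IH x1 x' Hx' Hc1).
Qed.

Arguments tens_chain {n B binf star Psi} HB {i t x x'}.

Lemma star_binf n (B : crystal n) (binf : B) (star : B -> B)
  (Psi : 'I_n -> B -> B * int) (HB : is_Binf binf star Psi) : star binf = binf.
Proof.
case: HB => [_ [[Hw0 Hw0u] [_ [_ [_ [_ [_ [Hwstar _]]]]]]]].
by apply: Hw0u; rewrite Hwstar.
Qed.

Arguments star_binf {n B binf star Psi}.

Lemma mainM n (Hn : (4 <= n)%N) (B : crystal n) (binf : B) (star : B -> B)
  (Psi : 'I_n -> B -> B * int) (HB : is_Binf binf star Psi) :
  forall (s : seq 'I_n) (v0 v : spinor n), opath (@spin_f n) s v0 = Some v ->
  exists b : B, opath (@ft n B) (rev s) binf = Some b /\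
     Phi Psi s b = (binf, nseq (size s) (-1)) /\
     opath (@ft n B) s binf = Some (star b).
Proof.
have Hsb := star_binf HB.
have HB' := HB.
case: HB' => [Hcry [[Hw0 Hw0u] [_ [[Heps0 HepsN] [HPsi [_ [Hinv [_ HK]]]]]]]].
elim/last_ind => [|s' i IH] v0 v.
- move=> _; exists binf; by rewrite Hsb.
- rewrite opath_rcons; case E: (opath (@spin_f n) s' v0) => [u|] //= Hv.
  have [b' [Hb1 [Hb2 Hb3]]] := IH v0 u E.
  have [Du _] := spin_step n Hn i u v Hv.
  have Hcond : condh i (rev s') (hpair i (wt binf)).
  { rewrite Hw0 hpair0. apply: (G_cond Hn i _ _ _ E 0); rewrite Du; lia. }
  have Htc := tens_chain HB Hb1 Hcond.
  have [[Hinj Hstr] [Hpsi0 _]] := HPsi i.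
  have Hemb : forall (j : 'I_n) (x : B), @ft n (tensor B (Bi i)) j (Psi i x) = omap (Psi i) (@ft n B j x).
  { by move=> j x; case: (Hstr j x). }
  have Hbase : ft i ((binf, 0) : tensor B (Bi i)) = Some ((binf, -1) : tensor B (Bi i)).
  { rewrite /= (Hcry i binf).1 Heps0 Hw0 hpair0 /= eqxx /=.
    by rewrite sub0r. }
  have := opath_embed Hemb (i :: rev s') binf.
  rewrite Hpsi0 opath_cons Hbase /= Htc.
  case E2: (opath (@ft n B) (i :: rev s') binf) => [b2|] //= [Hp2].
  exists b2; split; first by rewrite rev_rcons.
  split.
  + rewrite /Phi rev_rcons /= -Hp2 /=.
    rewrite -[Phi_rev Psi (rev s') b']/(Phi Psi s' b') Hb2 /=.
    by rewrite size_rcons -cats1 -addn1 nseqD.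
  + have [c [_ [b'' [Hit Hpc]]]] := HK i b2.
    rewrite -Hp2 in Hpc; case: Hpc => Eb Ec.
    have Ec1 : c = 1%N by lia.
    subst c; rewrite /= /estar in Hit.
    case E3: (et i (star b2)) Hit => [z|] //= [Hz].
    have Hz' : z = star b' by rewrite Eb -Hz Hinv.
    have Hf : ft i z = Some (star b2) by apply/((Hcry i z).2.2.2.1 (star b2)).
    by rewrite opath_rcons Hb3 /= -Hz' Hf.
Qed.

Arguments mainM {n} Hn {B binf star Psi} HB {s v0 v}.

Lemma opath_fstar n (B : crystal n) (star : B -> B) (Hinv : forall b, star (star b) = b) :
  forall s x, opath (fstar star) s x = omap star (opath (@ft n B) s (star x)).
Proof.
elim=> [|j t IH] x; first by rewrite !opath_nil /= Hinv.
rewrite !opath_cons /fstar; case: (ft j (star x)) => [y|] //=.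
by rewrite IH Hinv.
Qed.

Arguments opath_fstar {n B star}.

Theorem proposition10p1 (n : nat) (Hn : (4 <= n)%N)
    (B : crystal n) (binf : B) (star : B -> B) (Psi : 'I_n -> B -> B * int)
    (HB : is_Binf binf star Psi)
    (omega : spinor n) (Homega : omega = bLam_nm1 n \/ omega = bLam_n n)
    (s : seq 'I_n) (Hs : opath (@spin_f n) s omega <> None) :
  (exists b : B, opath (fstar star) s binf = Some b /\
                 Phi Psi s b = (binf, nseq (size s) (-1))) /\
  (exists b : B, opath (@ft n B) (rev s) binf = Some b /\
                 Phi Psi s b = (binf, nseq (size s) (-1))).
Proof.
case E: (opath (@spin_f n) s omega) Hs => [v|] // _.
have [b [H1 [H2 H3]]] := mainM Hn HB E.
have Hsb := star_binf HB.
have Hinv : forall b, star (star b) = b by case: HB => [_ [_ [_ [_ [_ [_ [Hi _]]]]]]].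
split; exists b; split => //.
by rewrite opath_fstar // Hsb H3 /= Hinv.
Qed.
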